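(* For all $T\in\mathcal{T}_H$ and all $j\in\{2,\dots,N\}$ it holds $\mathcal{P}_Hb_{j,T}=b_{j,T}$.
   Context: $\mathcal{T}_H$ is a quasi-uniform non-degenerate quadrilateral mesh of a polygonal Lipschitz domain $D\subset\mathbb{R}^d$, mesh size $H$. For fixed $p\in\mathbb{N}_0$, $\mathcal{V}_H$ is the space of elementwise polynomials of coordinate degree $\le p$, $\Pi_H$ the elementwise $L^2$-projection onto $\mathcal{V}_H$, and $\{\Lambda_{j,T}\}_{j=1}^N$, $N=(p+1)^d$, the $L^2(T)$-orthonormal shifted tensor-product Legendre basis on $T$, with $\Lambda_{1,T}$ the constant function. For each $T,j$, $b_{j,T}\in H^1_0(T)$ (extended by zero) satisfies $\Pi_Hb_{j,T}=\Lambda_{j,T}$. $\mathcal{B}_Hv:=\sum_T\sum_j(\int_Tv\Lambda_{j,T}dx)b_{j,T}$. $\Pi_H^0$ is the $L^2$-projection onto piecewise constants; $\mathcal{E}_H$ maps a piecewise constant function to the continuous piecewise bilinear function whose value at an interior node is the average of the adjacent elementwise values and which vanishes at boundary nodes; $\mathcal{I}_H:=\mathcal{E}_H\circ\Pi_H^0$ and $\mathcal{P}_Hv:=\mathcal{I}_Hv+\mathcal{B}_H(v-\mathcal{I}_Hv)$. *)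

(* Defs.v *)
From HB Require Import structures.
From mathcomp Require Import all_boot all_order all_algebra.
From mathcomp Require Import all_classical all_reals all_analysis.
Set Implicit Arguments. Unset Strict Implicit. Unset Printing Implicit Defensive.
Import Order.TTheory GRing.Theory Num.Theory.
Import numFieldNormedType.Exports.
Local Open Scope classical_set_scope.
Local Open Scope ring_scope.

Section Defs.
Variables (R : realType) (d p : nat).

Definition point := 'rV[R]_d.

(** Legendre polynomials on [-1,1] via the three-term recurrence:
    leg_pair n t = (P_n t, P_(n+1) t). *)
Fixpoint leg_pair (n : nat) (t : R) : R * R :=
  match n with
  | 0 => (1, t)
  | m.+1 => let (a, b) := leg_pair m t in
            (b, ((2 * m + 3)%:R * t * b - m.+1%:R * a) / (m.+2)%:R)
  end.
Definition legendre (n : nat) (t : R) : R := (leg_pair n t).1.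

(** Shifted Legendre polynomial on [a,b], normalised in L^2(a,b). *)
Definition sleg (n : nat) (a b t : R) : R :=
  Num.sqrt ((2 * n + 1)%:R / (b - a)) * legendre n ((2 * t - a - b) / (b - a)).

(** Multi-indices (tensor-product degrees, coordinate degree <= p). *)
Definition multi := {ffun 'I_d -> 'I_p.+1}.
(** The multi-index of the constant basis function (j = 1 in the paper). *)
Definition alpha0 : multi := [ffun => ord0].

(** Elements of the mesh: axis-parallel boxes prod_k [lo T k, hi T k]. *)
Variables (E : finType) (lo hi : E -> 'I_d -> R).

Definition inbox (T : E) (x : point) : bool :=
  [forall k, (lo T k <= x ord0 k) && (x ord0 k <= hi T k)].
Definition boxset (T : E) : set point := [set x | inbox T x].
Definition openbox (T : E) : set point :=
  [set x | forall k, lo T k < x ord0 k < hi T k].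
Definition vertex (T : E) (s : {ffun 'I_d -> bool}) : point :=
  \row_k (if s k then hi T k else lo T k).

Definition Dom : set point := interior (\bigcup_(T in [set: E]) boxset T).

Definition Lam (T : E) (a : multi) (x : point) : R :=
  \prod_(k < d) sleg (a k) (lo T k) (hi T k) (x ord0 k).

Definition setc (x : point) (k : 'I_d) (t : R) : point :=
  \row_i (if i == k then t else x ord0 i).
Fixpoint iint (ks : seq 'I_d) (T : E) (f : point -> R) (x : point) : R :=
  match ks with
  | [::] => f x
  | k :: ks' => Rintegral (@lebesgue_measure R) `[lo T k, hi T k]%classic
                  (fun t => iint ks' T f (setc x k t))
  end.
Definition boxint (T : E) (f : point -> R) : R := iint (enum 'I_d) T f 0.

Definition broken := E -> point -> R.

(** Pi_H : elementwise L^2 projection onto Q_p (via the ONB Lambda). *)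
Definition PiH (v : point -> R) : broken :=
  fun T x => \sum_(a : multi) boxint T (fun y => v y * Lam T a y) * Lam T a x.

(** Pi_H^0 : elementwise L^2 projection onto constants (via Lambda_{1,T}). *)
Definition Pi0 (v : point -> R) : broken :=
  fun T x => boxint T (fun y => v y * Lam T alpha0 y) * Lam T alpha0 x.

(** E_H : nodal averaging into continuous piecewise (multi)linear functions,
    zero at boundary nodes. *)
Definition nodeval (f : broken) (z : point) : R :=
  if `[< Dom z >] then
    (\sum_(T | inbox T z) f T z) / (#|[set T | inbox T z]|)%:R
  else 0.
Definition lam (T : E) (s : {ffun 'I_d -> bool}) (k : 'I_d) (x : point) : R :=
  if s k then (x ord0 k - lo T k) / (hi T k - lo T k)
  else (hi T k - x ord0 k) / (hi T k - lo T k).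
Definition EH (f : broken) : point -> R :=
  fun x => match [pick T | inbox T x] with
           | Some T => \sum_(s : {ffun 'I_d -> bool})
                         nodeval f (vertex T s) * \prod_(k < d) lam T s k x
           | None => 0
           end.

Definition IH (v : point -> R) : point -> R := EH (Pi0 v).

(** B_H, given the bubbles b T a (extended by zero). *)
Definition BH (b : E -> multi -> point -> R) (v : point -> R) : point -> R :=
  fun x => \sum_(T : E) \sum_(a : multi)
             boxint T (fun y => v y * Lam T a y) * b T a x.

Definition PH (b : E -> multi -> point -> R) (v : point -> R) : point -> R :=
  fun x => IH v x + BH b (fun y => v y - IH v y) x.

End Defs.

(* Main.v *)
Require Import Defs.
From HB Require Import structures.
From mathcomp Require Import all_boot all_order all_algebra.
From mathcomp Require Import all_classical all_reals all_analysis.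
From mathcomp Require Import lra.
Import Order.TTheory GRing.Theory Num.Theory.
Set Implicit Arguments. Unset Strict Implicit. Unset Printing Implicit Defensive.
Local Open Scope classical_set_scope.
Local Open Scope ring_scope.

Section Uni.
Variable R : realType.

Fixpoint lpp (n : nat) : {poly R} * {poly R} :=
  match n with
  | 0 => (1, 'X)
  | m.+1 => let (a, b) := lpp m in
            (b, ((m.+2)%:R)^-1 *: ((2 * m + 3)%:R *: ('X * b) - (m.+1)%:R *: a))
  end.

Lemma lpp_eval n (t : R) : (lpp n).1.[t] = (leg_pair n t).1 /\ (lpp n).2.[t] = (leg_pair n t).2.
Proof.
elim: n => [|n [IH1 IH2]] /=; first by rewrite hornerC hornerX.
case: (lpp n) IH1 IH2 => a b; case: (leg_pair n t) => a1 b1 /= H1 H2; split => //.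
rewrite !hornerE H1 H2 mulrC; congr (_ * _); rewrite mulrA //.
Qed.

Lemma lpp_size n : size (lpp n).1 = n.+1 /\ size (lpp n).2 = n.+2.
Proof.
elim: n => [|n [IH1 IH2]] /=; first by rewrite size_poly1 size_polyX.
case: (lpp n) IH1 IH2 => a b /= IH1 IH2; split => //.
have b0 : b != 0 by rewrite -size_poly_eq0 IH2.
rewrite size_scale ?invr_eq0 ?pnatr_eq0 //.
rewrite size_polyDl; rewrite size_scale ?pnatr_eq0 ?addn3 // mulrC size_mulX // IH2 //.
by rewrite size_polyN (leq_ltn_trans (size_scale_leq _ _)) // IH1 ltnS leqnSn.
Qed.


Lemma size_sum_lpp m (u : nat -> R) : leq (size (\sum_(n < m) u n *: (lpp n).1)) m.
Proof.
apply: (big_ind (fun q : {poly R} => leq (size q) m)) => //.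
- by rewrite size_poly0.
- by move=> x y Hx Hy; rewrite (leq_trans (size_polyD _ _)) // geq_max Hx Hy.
- move=> i _; rewrite (leq_trans (size_scale_leq _ _)) //.
  by case: (lpp_size i) => -> _.
Qed.

Lemma lpp_indep m (u : nat -> R) :
  \sum_(n < m) u n *: (lpp n).1 = 0 -> forall n, (n < m)%N -> u n = 0.
Proof.
elim: m => [|m IH] H n //.
rewrite big_ord_recr /= in H.
have Hm : u m = 0.
  have := congr1 (fun q : {poly R} => q`_m) H.
  rewrite coefD coefZ coef0.
  rewrite nth_default ?size_sum_lpp // add0r.
  move/eqP; rewrite mulf_eq0 => /orP [/eqP //|].
  case: (lpp_size m) => Hs _.
  have : lead_coef (lpp m).1 != 0 by rewrite lead_coef_eq0 -size_poly_eq0 Hs.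
  by rewrite /lead_coef Hs /= => /negPf ->.
rewrite Hm scale0r addr0 in H.
rewrite ltnS leq_eqVlt => /orP [/eqP -> //|]; exact: IH.
Qed.


Variable p : nat.

Definition cst (n : nat) (lo hi : R) : R := Num.sqrt ((2 * n + 1)%:R / (hi - lo)).
Definition sarg (lo hi t : R) : R := (2 * t - lo - hi) / (hi - lo).
Lemma sleg_poly n lo hi t : sleg n lo hi t = cst n lo hi * (lpp n).1.[sarg lo hi t].
Proof. by rewrite /sleg /legendre; case: (lpp_eval n (sarg lo hi t)) => -> _. Qed.

Lemma cst_neq0 n lo hi : lo < hi -> cst n lo hi != 0.
Proof.
move=> H; rewrite /cst gt_eqF // sqrtr_gt0 divr_gt0 // ?subr_gt0 //.
Qed.

Definition tpt (lo hi : R) (i : 'I_p.+1) : R := lo + (hi - lo) * (i%:R / p.+1%:R).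

Lemma tpt_in lo hi i : lo < hi -> lo <= tpt lo hi i <= hi.
Proof.
move=> H; have H1 : 0 <= (i%:R / p.+1%:R : R) by rewrite divr_ge0 // ler0n.
have H2 : (i%:R / p.+1%:R : R) <= 1.
  by rewrite ler_pdivrMr ?ltr0n // mul1r ler_nat ltnW.
rewrite /tpt; apply/andP; split.
  by rewrite lerDl mulr_ge0 // subr_ge0 ltW.
rewrite -lerBrDl -[X in _ <= X]mulr1 ler_wpM2l // subr_ge0 ltW //.
Qed.

Lemma sarg_tpt_inj lo hi : lo < hi -> injective (fun i => sarg lo hi (tpt lo hi i)).
Proof.
move=> H i j; rewrite /sarg /tpt.
have hl : hi - lo != 0 by rewrite subr_eq0 gt_eqF.
move/(congr1 (fun z => z * (hi - lo))); rewrite !divfK //.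
move=> E; have : (hi - lo) * (i%:R / p.+1%:R) = (hi - lo) * (j%:R / p.+1%:R) by move: E; generalize (i%:R / p.+1%:R : R) (j%:R / p.+1%:R : R) (hi - lo) => x y z E; lra.
move/(mulfI hl)/(congr1 (fun z => z * p.+1%:R)); rewrite !divfK ?pnatr_eq0 //.
by move/eqP; rewrite eqr_nat => /eqP /val_inj.
Qed.

Definition Amx (lo hi : R) : 'M[R]_p.+1 := \matrix_(n, i) sleg n lo hi (tpt lo hi i).

Lemma Amx_unit lo hi : lo < hi -> Amx lo hi \in unitmx.
Proof.
move=> H; rewrite unitmxE unitfE; apply/negP => /det0P [v v0 vA].
pose u n := v ord0 (inord n) * cst n lo hi.
have HQ : \sum_(n < p.+1) u n *: (lpp n).1 = 0.
  apply/eqP; apply: contraT => Q0.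
  have := max_poly_roots Q0 (rs := [seq sarg lo hi (tpt lo hi i) | i <- enum 'I_p.+1]).
  rewrite size_map size_enum_ord.
  have -> : uniq [seq sarg lo hi (tpt lo hi i) | i <- enum 'I_p.+1].
    by rewrite map_inj_uniq ?enum_uniq //; exact: sarg_tpt_inj.
  have -> : all (root (\sum_(n < p.+1) u n *: (lpp n).1)) [seq sarg lo hi (tpt lo hi i) | i <- enum 'I_p.+1].
    apply/allP => x /mapP [i _ ->].
    have := congr1 (fun M : 'M[R]_(1, p.+1) => M ord0 i) vA; rewrite !mxE => Hi.
    rewrite /root horner_sum; apply/eqP; rewrite -[X in _ = X]Hi; apply: eq_bigr => n _.
    by rewrite hornerZ /u inord_val mxE sleg_poly mulrA.
  move=> /(_ isT isT); rewrite ltnNge.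
  by rewrite size_sum_lpp.
apply/negP: v0; rewrite negbK; apply/eqP/rowP => n; rewrite mxE.
have := lpp_indep HQ (ltn_ord n).
rewrite /u inord_val => /eqP; rewrite mulf_eq0 (negPf (cst_neq0 n H)) orbF.
by move=> /eqP; rewrite (ord1 ord0).
Qed.

Definition wgt lo hi (m i : 'I_p.+1) : R := invmx (Amx lo hi) i m.

Lemma dual lo hi (m n : 'I_p.+1) : lo < hi ->
  \sum_i wgt lo hi m i * sleg n lo hi (tpt lo hi i) = (m == n)%:R.
Proof.
move=> H; have := congr1 (fun M : 'M[R]_p.+1 => M n m) (mulmxV (Amx_unit H)).
rewrite !mxE eq_sym => <-; apply: eq_bigr => i _.
by rewrite !mxE mulrC.
Qed.

End Uni.

Section Multi.
Variables (R : realType) (d p : nat) (E : finType) (lo hi : E -> 'I_d -> R).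

Lemma indep T (e : multi d p -> R) : (forall k, lo T k < hi T k) ->
  (forall x, inbox lo hi T x -> \sum_a e a * Lam lo hi T a x = 0) -> forall m, e m = 0.
Proof.
move=> Hb He m.
pose pt (i : multi d p) : 'rV[R]_d := \row_k tpt (lo T k) (hi T k) (i k).
pose W k (mm j : 'I_p.+1) := wgt (lo T k) (hi T k) mm j.
pose S k (n j : 'I_p.+1) := sleg n (lo T k) (hi T k) (tpt (lo T k) (hi T k) j).
have H1 : e m = \sum_a e a * \prod_k \sum_j W k (m k) j * S k (a k) j.
  rewrite (bigD1 m) //= big1 => [|k _]; last by rewrite /W /S dual // eqxx.
  rewrite mulr1 big1 ?addr0 // => a Ham.
  case: (boolP [exists k, m k != a k]) => [/existsP [k Hk] | Hn].
    by rewrite (bigD1 k) //= /W /S dual // (negPf Hk) mul0r mulr0.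
  exfalso; move/negP: Ham; apply; apply/eqP/ffunP => k; move: Hn.
  by rewrite negb_exists => /forallP /(_ k); rewrite negbK => /eqP.
rewrite H1.
rewrite (eq_bigr (fun a => \sum_(f : multi d p) \prod_k W k (m k) (f k) * (e a * Lam lo hi T a (pt f)))); last first.
  move=> a _; rewrite bigA_distr_bigA mulr_sumr; apply: eq_bigr => f _.
  rewrite big_split /= /Lam.
  under [X in _ = _ * (_ * X)]eq_bigr do rewrite mxE.
  by rewrite mulrCA.
rewrite exchange_big big1 // => f _; rewrite -mulr_sumr He ?mulr0 //.
by apply/forallP => k; rewrite mxE; apply: tpt_in.
Qed.

End Multi.

Unset Implicit Arguments. Set Strict Implicit. Set Printing Implicit Defensive.

Theorem mainTheorem6 (R : realType) (d p : nat) (E : finType)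
  (lo hi : E -> 'I_d -> R)
  (* non-degenerate boxes *)
  (Hbox : forall T k, lo T k < hi T k)
  (* elements do not overlap *)
  (Hdisj : forall T T' : E, T != T' -> openbox lo hi T `&` openbox lo hi T' = set0)
  (* conforming mesh (no hanging nodes) *)
  (Hconf : forall (T T' : E) s, inbox lo hi T' (vertex lo hi T s) ->
             exists s', vertex lo hi T s = vertex lo hi T' s')
  (b : E -> multi d p -> 'rV[R]_d -> R)
  (* b_{a,T} is supported in T (extended by zero) *)
  (Hsupp : forall T a x, ~~ inbox lo hi T x -> b T a x = 0)
  (* Pi_H b_{a,T} = Lambda_{a,T} (elementwise, Lambda_{a,T} extended by 0) *)
  (Hb : forall T a T' x, inbox lo hi T' x ->
          PiH p lo hi (b T a) T' x = (if T' == T then Lam lo hi T a x else 0)) :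
  forall (T : E) (a : multi d p), a != alpha0 d p ->
    PH lo hi b (b T a) = b T a.
Proof.
move=> T a Ha.
set v := b T a.
have K : forall T' a', boxint lo hi T' (fun y => v y * Lam lo hi T' a' y)
                       = ((T' == T) && (a' == a))%:R.
  move=> T' a'.
  pose e := fun a'' => boxint lo hi T' (fun y => v y * Lam lo hi T' a'' y)
                       - ((T' == T) && (a'' == a))%:R.
  suff: e a' = 0 by move/eqP; rewrite subr_eq0 => /eqP.
  apply: (indep (e:=e) (Hbox T')) => x Hx.
  have := Hb T a T' x Hx; rewrite /PiH => HH.
  rewrite /e; under eq_bigr do rewrite mulrBl.
  rewrite sumrB HH.
  case: eqP => [->|_] /=.
    rewrite (bigD1 a) //= eqxx mul1r big1 ?addr0 ?subrr // => a'' /negPf ->.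
    by rewrite mul0r.
  by rewrite big1 ?subrr // => ? _; rewrite mul0r.
have Z : forall x, IH p lo hi v x = 0.
  move=> x; rewrite /IH /EH; case: pickP => // T0 _; apply: big1 => s _.
  rewrite /nodeval; case: ifP => _; last by rewrite mul0r.
  rewrite big1 ?mul0r // => T1 _; rewrite /Pi0 K.
  by rewrite [alpha0 d p == a]eq_sym (negPf Ha) andbF mul0r.
apply: funext => x; rewrite /PH Z add0r.
have -> : (fun y => v y - IH p lo hi v y) = v by apply: funext => y; rewrite Z subr0.
rewrite /BH (bigD1 T) //= (bigD1 a) //= K !eqxx mul1r.
rewrite [X in _ + X + _]big1 ?addr0; last first.
  by move=> a1 Ha1; rewrite K eqxx (negPf Ha1) mul0r.
rewrite big1 ?addr0 // => T1 HT1; apply: big1 => a1 _.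
by rewrite K (negPf HT1) mul0r.
Qed.
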